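(* There is an absolute constant $c>0$ such that for every integer $d\ge2$ and every $d$-decomposable permutation $X=(x_1,\dots,x_n)$ of $[n]$ (viewed as an access sequence of length $n$), $\mathsf{F}^{1}(X)\le c\,\log d\cdot |X|$.
   Context: $\log(x)=\log_2(\max\{2,x\})$. For a permutation $\sigma=(\sigma(1),\dots,\sigma(n))$, an interval $[a,b]$ with $1\le a\le b\le n$ is a block if $\{\sigma(a),\dots,\sigma(b)\}=\{c,c+1,\dots,e\}$ for some integers $c\le e$. A block partition of $\sigma$ is a partition of the positions $[n]$ into consecutive blocks $[a_1,b_1],\dots,[a_j,b_j]$; $\sigma_i$ is the permutation order-isomorphic to $\sigma$ restricted to $[a_i,b_i]$, and the skeleton $\tilde\sigma$ is the permutation of $[j]$ order-isomorphic to $(\sigma(q_1),\dots,\sigma(q_j))$ for any $q_i\in[a_i,b_i]$; we write $\sigma=\tilde\sigma[\sigma_1,\dots,\sigma_j]$. A permutation is $d$-decomposable if it is $(1)$, or $\sigma=\tilde\sigma[\sigma_1,\dots,\sigma_{j}]$ for some block partition into $2\le j\le d$ blocks with each $\sigma_i$ $d$-decomposable. One-finger cost: for a static BST $T$ on $[n]$ with $d_T(a,b)$ the number of edges between $a$ and $b$, a single finger starting at some node $\ell_1$ moves to each $x_t$ in turn; cost $\sum_{t=1}^n(1+d_T(x_t,x_{t-1}))$ with $x_0=\ell_1$. $\mathsf{F}^1(X)$ is the minimum over $T$ and $\ell_1$. *)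

(* Defs.v *)
From Stdlib Require Import Reals.
From mathcomp Require Import all_boot.

Set Implicit Arguments.
Unset Strict Implicit.
Unset Printing Implicit Defensive.

Definition logP (x : R) : R := Rdiv (ln (Rmax (IZR 2) x)) (ln (IZR 2)).

(** A permutation of [n] = {1,...,n}, given as the sequence (sigma(1),...,sigma(n)). *)
Definition is_perm (n : nat) (s : seq nat) : bool := perm_eq s (iota 1 n).

Definition consecutive_values (b : seq nat) : bool :=
  perm_eq b (iota (foldr minn (head 0 b) b) (size b)).

(** the permutation order-isomorphic to a sequence of distinct numbers *)
Definition std (s : seq nat) : seq nat :=
  map (fun x => count (fun y => y <= x) s) s.

(** A block partition of the positions into
    consecutive blocks is a splitting s = b_1 ++ ... ++ b_j into nonempty
    pieces each of whose value sets is an interval; sigma_i = std b_i. *)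
Inductive decomposable (d : nat) : seq nat -> Prop :=
| decomp_one : decomposable d [:: 1]
| decomp_split (bs : seq (seq nat)) :
    2 <= size bs <= d ->
    all (fun b => b != [::]) bs ->
    all consecutive_values bs ->
    (forall b, b \in bs -> decomposable d (std b)) ->
    decomposable d (flatten bs).

Inductive btree : Type :=
| Leaf : btree
| Node : btree -> nat -> btree -> btree.

Fixpoint inorder (t : btree) : seq nat :=
  match t with
  | Leaf => [::]
  | Node l k r => inorder l ++ k :: inorder r
  end.

Definition bst_on (n : nat) (t : btree) : Prop := inorder t = iota 1 n.

Fixpoint root_path (t : btree) (k : nat) : seq nat :=
  match t with
  | Leaf => [::]
  | Node l x r =>
      x :: (if k < x then root_path l k else if x < k then root_path r k else [::])
  end.

Fixpoint common_prefix (s1 s2 : seq nat) : nat :=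
  match s1, s2 with
  | x :: s1', y :: s2' => if x == y then (common_prefix s1' s2').+1 else 0
  | _, _ => 0
  end.

(** d_T(a,b): number of edges on the tree path between nodes a and b *)
Definition tdist (t : btree) (a b : nat) : nat :=
  let pa := root_path t a in
  let pb := root_path t b in
  let p := common_prefix pa pb in
  (size pa - p) + (size pb - p).

Fixpoint finger_cost (t : btree) (cur : nat) (xs : seq nat) : nat :=
  match xs with
  | [::] => 0
  | x :: xs' => 1 + tdist t x cur + finger_cost t x xs'
  end.

(** F^1(X) <= B : since F^1(X) is the minimum over BSTs T on [n] and starting
    nodes l1 of the cost, it is at most B iff some (T, l1) achieves cost <= B. *)
Definition F1_le (n : nat) (X : seq nat) (B : R) : Prop :=
  exists (t : btree) (l1 : nat),
    bst_on n t /\ l1 \in iota 1 n /\ Rle (INR (finger_cost t l1 X)) B.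

(* Main.v *)
Require Import Defs.
From Stdlib Require Import Reals Lra.
From mathcomp Require Import all_boot.
From mathcomp Require Import zify.
From HB Require Import structures.

Set Implicit Arguments.
Unset Strict Implicit.
Unset Printing Implicit Defensive.

Notation lcp := common_prefix.

Lemma lcp_le1 p q : lcp p q <= size p.
Proof. elim: p q => [|x p IH] [|y q] //=; case: eqP => //= _; exact: IH. Qed.

Lemma lcp_sym p q : lcp p q = lcp q p.
Proof. elim: p q => [|x p IH] [|y q] //=; rewrite eq_sym; case: eqP => //= _; by rewrite IH. Qed.

Lemma lcp_le2 p q : lcp p q <= size q.
Proof. rewrite lcp_sym; exact: lcp_le1. Qed.

Lemma lcp_refl p : lcp p p = size p.
Proof. elim: p => [|x p IH] //=; by rewrite eqxx IH. Qed.

Lemma lcp_ultra p q r : minn (lcp p r) (lcp r q) <= lcp p q.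
Proof.
elim: p q r => [|x p IH] [|y q] [|z r] //=; try by rewrite ?minn0 ?min0n.
case: (x =P z) => [Exz|]; last by rewrite min0n.
case: (z =P y) => [Ezy|]; last by rewrite minn0.
rewrite Exz Ezy eqxx minnSS ltnS; exact: IH.
Qed.

Lemma lcp_cat Q p q : lcp (Q ++ p) (Q ++ q) = size Q + lcp p q.
Proof. elim: Q => [|x Q IH] //=; by rewrite eqxx IH. Qed.

Lemma lcp_map (f : nat -> nat) p q : injective f -> lcp (map f p) (map f q) = lcp p q.
Proof.
move=> inj; elim: p q => [|x p IH] [|y q] //=.
rewrite (inj_eq inj); case: eqP => //= _; by rewrite IH.
Qed.

Definition tdP (p q : seq nat) := (size p - lcp p q) + (size q - lcp p q).

Lemma tdistE t a b : tdist t a b = tdP (root_path t a) (root_path t b).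
Proof. by []. Qed.

Lemma tdP_sym p q : tdP p q = tdP q p.
Proof. rewrite /tdP lcp_sym; lia. Qed.

Lemma tdP_tri p q r : tdP p q <= tdP p r + tdP r q.
Proof.
rewrite /tdP.
have := lcp_ultra p q r. have := lcp_le1 p q. have := lcp_le2 p q.
have := lcp_le1 p r. have := lcp_le2 p r. have := lcp_le1 r q. have := lcp_le2 r q.
lia.
Qed.

Lemma tdist_sym t a b : tdist t a b = tdist t b a.
Proof. by rewrite !tdistE tdP_sym. Qed.

Lemma tdist_tri t a b c : tdist t a b <= tdist t a c + tdist t c b.
Proof. rewrite !tdistE; exact: tdP_tri. Qed.

Lemma tdist_refl t a : tdist t a a = 0.
Proof. by rewrite tdistE /tdP lcp_refl subnn. Qed.

Lemma tdP_cat Q p q : tdP (Q ++ p) (Q ++ q) = tdP p q.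
Proof. rewrite /tdP lcp_cat !size_cat. have := lcp_le1 p q; have := lcp_le2 p q. lia. Qed.

Lemma root_path_root l k r : root_path (Node l k r) k = [:: k].
Proof. by rewrite /= ltnn. Qed.

Lemma root_path_Node l k r x : exists s, root_path (Node l k r) x = k :: s.
Proof. by eexists. Qed.

Lemma tdist_root l k r x :
  tdist (Node l k r) k x = (size (root_path (Node l k r) x)).-1.
Proof.
rewrite tdistE root_path_root; have [s ->] := root_path_Node l k r x.
rewrite /tdP /= eqxx /=. lia.
Qed.

Fixpoint shift (s : nat) (t : btree) : btree :=
  match t with
  | Leaf => Leaf
  | Node l k r => Node (shift s l) (s + k) (shift s r)
  end.

Lemma inorder_shift s t : inorder (shift s t) = map (addn s) (inorder t).
Proof. elim: t => [|l IHl k r IHr] //=; by rewrite map_cat IHl IHr. Qed.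

Lemma root_path_shift s t k : root_path (shift s t) (s + k) = map (addn s) (root_path t k).
Proof.
elim: t => [|l IHl x r IHr] //=.
by rewrite !ltn_add2l; case: ifP => _; [rewrite IHl|case: ifP => _; [rewrite IHr|]].
Qed.

Lemma tdist_shift s t a b : tdist (shift s t) (s + a) (s + b) = tdist t a b.
Proof.
rewrite !tdistE !root_path_shift /tdP !size_map lcp_map //; exact: addnI.
Qed.

Lemma fc_shift s t c xs :
  finger_cost (shift s t) (s + c) (map (addn s) xs) = finger_cost t c xs.
Proof. elim: xs c => [|x xs IH] c //=; by rewrite tdist_shift IH. Qed.

Definition W t g xs := finger_cost t g xs + tdist t (last g xs) g.

Lemma W_shift s t c xs : W (shift s t) (s + c) (map (addn s) xs) = W t c xs.
Proof. by rewrite /W fc_shift last_map tdist_shift. Qed.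

Lemma fc_cat t c s1 s2 :
  finger_cost t c (s1 ++ s2) = finger_cost t c s1 + finger_cost t (last c s1) s2.
Proof. elim: s1 c => [|x s1 IH] c //=; rewrite IH; lia. Qed.

Lemma fc_move t cur c xs : finger_cost t cur xs <= tdist t cur c + finger_cost t c xs.
Proof.
case: xs => [|x xs] //=.
have := tdist_tri t x cur c; rewrite (tdist_sym t c cur) (tdist_sym t x c). lia.
Qed.

Lemma walk_bound (T : Type) t c (f : T -> nat) (bl : T -> seq nat) (ps : seq T) :
  W t c (flatten (map bl ps)) <=
  sumn [seq W t (f p) (bl p) + 2 * tdist t (f p) c | p <- ps].
Proof.
elim: ps => [|p ps IH] /=; first by rewrite /W /= tdist_refl.
set b := bl p; set F := flatten _; set g := f p.
rewrite /W fc_cat last_cat.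
set y := last c b.
have H1 : finger_cost t y F + tdist t (last y F) c <= tdist t y c + W t c F.
  rewrite /W; case: F => [|z F'] /=; first by rewrite tdist_refl; lia.
  have := fc_move t y c (z :: F'); rewrite /=; lia.
have H2 : finger_cost t c b + tdist t y c <= W t g b + 2 * tdist t g c.
  rewrite /W /y; clear y H1; case: b => [|z b'] /=; first by rewrite tdist_refl.
  have := fc_move t c g (z :: b'); rewrite /=.
  have := tdist_tri t (last z b') c g.
  rewrite (tdist_sym t c g). move=> A B. move: A B. clearbody g F. clear. move: (tdist t _ _) => x A B. lia.
move: IH H1 H2; rewrite /W -/F; lia.
Qed.

Lemma fc_compare t1 t2 g E (S : seq nat) :
  (forall x y, x \in S -> y \in S ->
     tdist t1 x y <= tdist t2 x y + E * ((x == g) + (y == g))) ->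
  forall xs cur, cur \in S -> all (mem S) xs ->
  finger_cost t1 cur xs <= finger_cost t2 cur xs + E * ((cur == g) + 2 * count_mem g xs).
Proof.
move=> HS; elim=> [|x xs IH] cur Hc //=.
case/andP=> Hx Hxs.
have := HS x cur Hx Hc; have := IH x Hx Hxs.
case: (x == g); case: (cur == g) => /=; nia.
Qed.

Lemma W_compare t1 t2 g E (S : seq nat) xs :
  (forall x y, x \in S -> y \in S ->
     tdist t1 x y <= tdist t2 x y + E * ((x == g) + (y == g))) ->
  g \in S -> all (mem S) xs -> count_mem g xs <= 1 ->
  W t1 g xs <= W t2 g xs + 5 * E.
Proof.
move=> HS Hg Hxs Hc.
have H1 := fc_compare HS Hg Hxs.
have Hl : last g xs \in S.
  have := mem_last g xs; rewrite inE => /orP [/eqP ->//|]; by move/(allP Hxs).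
have := HS _ _ Hl Hg. rewrite /W eqxx.
case: (last g xs == g) => /=; nia.
Qed.

Fixpoint bt_eq (a b : btree) : bool :=
  match a, b with
  | Leaf, Leaf => true
  | Node l k r, Node l' k' r' => [&& bt_eq l l', k == k' & bt_eq r r']
  | _, _ => false
  end.

Lemma bt_eqP : Equality.axiom bt_eq.
Proof.
elim=> [|l IHl k r IHr] [|l' k' r'] /=; try by constructor.
apply: (iffP idP).
  by case/and3P => /IHl -> /eqP -> /IHr ->.
by case=> <- <- <-; apply/and3P; split => //; [apply/IHl|apply/IHr].
Qed.

HB.instance Definition _ := hasDecEq.Build btree bt_eqP.

Fixpoint bal (f : nat) (T0 : btree) (ps : seq (nat * btree)) : btree :=
  match f with
  | 0 => T0
  | f'.+1 =>
    if ps is [::] then T0 else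
      let h := (size ps)./2 in
      let kT := nth (0, Leaf) ps h in
      Node (bal f' T0 (take h ps)) kT.1 (bal f' kT.2 (drop h.+1 ps))
  end.

Definition flatkt (ps : seq (nat * btree)) := flatten [seq p.1 :: inorder p.2 | p <- ps].

Lemma flatkt_cat a b : flatkt (a ++ b) = flatkt a ++ flatkt b.
Proof. by rewrite /flatkt map_cat flatten_cat. Qed.

Lemma flatkt_cons p b : flatkt (p :: b) = p.1 :: inorder p.2 ++ flatkt b.
Proof. by []. Qed.

Lemma mem_flatkt ps k T x : (k, T) \in ps -> (x == k) || (x \in inorder T) -> x \in flatkt ps.
Proof.
move=> Hin Hx; apply/flattenP; exists (k :: inorder T); last by rewrite inE.
by apply/mapP; exists (k, T).
Qed.

Lemma ps_split (ps : seq (nat * btree)) h : h < size ps ->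
  ps = take h ps ++ nth (0, Leaf) ps h :: drop h.+1 ps.
Proof. by move=> Hh; rewrite -drop_nth // cat_take_drop. Qed.

Lemma half_lt n : 0 < n -> n./2 < n.
Proof. rewrite -divn2; move=> *; lia. Qed.

Lemma bal_inorder f T0 ps : size ps <= f ->
  inorder (bal f T0 ps) = inorder T0 ++ flatkt ps.
Proof.
elim: f T0 ps => [|f IH] T0 ps.
  by rewrite leqn0 => /nilP ->; rewrite cats0.
case: ps => [|p0 ps0]; first by rewrite cats0.
set ps := p0 :: ps0 => Hs.
have Hh : (size ps)./2 < size ps by apply: half_lt.
have Hsz1 : size (take (size ps)./2 ps) <= f by rewrite size_take Hh; lia.
have Hsz2 : size (drop (size ps)./2.+1 ps) <= f by rewrite size_drop; lia.
rewrite [bal _ _ _]/= -/ps.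
rewrite [inorder _]/= (IH _ _ Hsz1) (IH _ _ Hsz2).
by rewrite [in RHS](ps_split Hh) flatkt_cat flatkt_cons -catA.
Qed.

Lemma pw_left l k r x : pairwise ltn (l ++ k :: r) -> x \in l -> x < k.
Proof.
rewrite pairwise_cat => /and3P [/allrelP H _ _] Hx; apply: H => //; exact: mem_head.
Qed.

Lemma pw_right l k r x : pairwise ltn (l ++ k :: r) -> x \in r -> k < x.
Proof.
rewrite pairwise_cat => /and3P [_ _]; rewrite pairwise_cons => /andP [/allP H _] Hx.
exact: H.
Qed.

Lemma pw_catl l r : pairwise ltn (l ++ r) -> pairwise ltn l.
Proof. by rewrite pairwise_cat => /and3P []. Qed.

Lemma pw_catr l r : pairwise ltn (l ++ r) -> pairwise ltn r.
Proof. by rewrite pairwise_cat => /and3P []. Qed.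

Definition sub_at (t S : btree) (e : nat) :=
  exists Q : seq nat, size Q <= e /\
    forall x, x \in inorder S -> root_path t x = Q ++ root_path S x.

Lemma bal_path f e T0 ps : size ps <= f -> size ps < 2 ^ e ->
  pairwise ltn (inorder (bal f T0 ps)) ->
  sub_at (bal f T0 ps) T0 e /\
  (forall k T, (k, T) \in ps ->
     size (root_path (bal f T0 ps) k) <= e /\ sub_at (bal f T0 ps) T e).
Proof.
elim: f e T0 ps => [|f IH] e T0 ps.
  rewrite leqn0 => /nilP -> _ _; split; last by [].
  by exists [::]; split.
case: ps => [|p0 ps0].
  move=> _ _ _; split; last by [].
  by exists [::]; split.
set ps := p0 :: ps0 => Hs He.
have Hh : (size ps)./2 < size ps by apply: half_lt.
set h := (size ps)./2.
set kT := nth (0, Leaf) ps h.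
set L := bal f T0 (take h ps).
set R := bal f kT.2 (drop h.+1 ps).
have Ebal : bal f.+1 T0 ps = Node L kT.1 R by [].
rewrite Ebal.
case: e He => [|e] He; first by rewrite expn0 ltnS leqn0 in He.
rewrite /= => Hpw.
have HL : forall x, x \in inorder L -> root_path (Node L kT.1 R) x = kT.1 :: root_path L x.
  by move=> x Hx; rewrite /= (pw_left Hpw Hx).
have HR : forall x, x \in inorder R -> root_path (Node L kT.1 R) x = kT.1 :: root_path R x.
  move=> x Hx; have := pw_right Hpw Hx; rewrite /=.
  by case: ltngtP.
have Hsz1 : size (take h ps) <= f by rewrite size_take Hh; lia.
have Hsz2 : size (drop h.+1 ps) <= f by rewrite size_drop; lia.
have He1 : size (take h ps) < 2 ^ e.
  rewrite size_take Hh /h -divn2; move: He; rewrite expnS; lia.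
have He2 : size (drop h.+1 ps) < 2 ^ e.
  rewrite size_drop /h; move: He; rewrite expnS -divn2; lia.
have [IL1 IL2] := IH e T0 (take h ps) Hsz1 He1 (pw_catl Hpw).
have Hpw2 : pairwise ltn (inorder R).
  by move: (pw_catr Hpw); rewrite pairwise_cons => /andP [].
have [IR1 IR2] := IH e kT.2 (drop h.+1 ps) Hsz2 He2 Hpw2.
rewrite -/L in IL1 IL2; rewrite -/R in IR1 IR2.
have lift_L : forall S, {subset inorder S <= inorder L} -> sub_at L S e -> sub_at (Node L kT.1 R) S e.+1.
  move=> S Hsub [Q [HQ HQx]]; exists (kT.1 :: Q); split => // x Hx.
  by rewrite HL ?HQx //; apply: Hsub.
have lift_R : forall S, {subset inorder S <= inorder R} -> sub_at R S e -> sub_at (Node L kT.1 R) S e.+1.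
  move=> S Hsub [Q [HQ HQx]]; exists (kT.1 :: Q); split => // x Hx.
  by rewrite HR ?HQx //; apply: Hsub.
have inL : inorder L = inorder T0 ++ flatkt (take h ps) by rewrite bal_inorder.
have inR : inorder R = inorder kT.2 ++ flatkt (drop h.+1 ps) by rewrite bal_inorder.
split.
  apply: lift_L => // x Hx; rewrite inL mem_cat Hx //.
move=> k T; rewrite {1}(ps_split Hh) mem_cat inE => /orP [Hin|/orP [/eqP Heq|Hin]].
- have [H1 H2] := IL2 k T Hin; split.
    have Hk : k \in inorder L by rewrite inL mem_cat (mem_flatkt Hin) ?eqxx ?orbT.
    by rewrite (pw_left Hpw Hk).
  apply: lift_L => // x Hx; by rewrite inL mem_cat (mem_flatkt Hin) ?Hx ?orbT.
- have [Ek ET] : k = kT.1 /\ T = kT.2 by rewrite -/kT in Heq; rewrite -Heq.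
  rewrite Ek ET; split; first by rewrite /= ltnn.
  apply: lift_R => // x Hx; by rewrite inR mem_cat Hx.
- have [H1 H2] := IR2 k T Hin; split.
    have Hk : k \in inorder R by rewrite inR mem_cat (mem_flatkt Hin) ?eqxx ?orbT.
    have Hk2 := pw_right Hpw Hk. have Hn : (k < kT.1) = false by rewrite ltnNge (ltnW Hk2). by rewrite Hn Hk2.
  apply: lift_R => // x Hx; by rewrite inR mem_cat (mem_flatkt Hin) ?Hx ?orbT.
Qed.

Lemma count_le_iota g m x :
  count (fun y => y <= x) (iota g m) = minn m (x.+1 - g).
Proof.
elim: m g => [|m IH] g /=; first by rewrite min0n.
rewrite IH; case: (leqP g x) => H; lia.
Qed.

Lemma std_shift b g m : perm_eq b (iota g m) -> 1 <= g ->
  map (addn g.-1) (std b) = b /\ perm_eq (std b) (iota 1 m).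
Proof.
move=> Hp Hg.
have E : map (addn g.-1) (std b) = b.
  rewrite /std -map_comp -[RHS]map_id; apply/eq_in_map => x Hx /=.
  have := perm_mem Hp x; rewrite Hx mem_iota => /esym /andP [H1 H2].
  rewrite (permP Hp) count_le_iota; lia.
split => //.
apply: (@perm_map_inj _ _ (addn g.-1)); first exact: addnI.
by rewrite E -iotaDl addn1 prednK.
Qed.

Lemma flat_iota_sorted (L : seq (nat * nat)) :
  sorted (fun u v => u.1 <= v.1) L -> all (fun u => 0 < u.2) L ->
  uniq (flatten [seq iota u.1 u.2 | u <- L]) ->
  pairwise ltn (flatten [seq iota u.1 u.2 | u <- L]).
Proof.
elim: L => [|u L IH] //= Hs /andP [Hu Hall]; rewrite cat_uniq => /and3P [U1 U2 U3].
rewrite pairwise_cat; apply/and3P; split.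
- apply/allrelP => x y Hx /flattenP [s /mapP [v Hv ->] Hy].
  have Hmin : u.1 <= v.1.
    have := order_path_min (fun (y x z : nat * nat) => @leq_trans y.1 x.1 z.1) Hs.
    by move/allP => /(_ v Hv).
  have Hv1 : v.1 \notin iota u.1 u.2.
    apply: contra U2 => Hin; apply/hasP; exists v.1 => //.
    apply/flattenP; exists (iota v.1 v.2); first by apply/mapP; exists v.
    by rewrite mem_iota leqnn /= -{1}(addn0 v.1) ltn_add2l (allP Hall v Hv).
  move: Hx Hy Hv1; rewrite !mem_iota /= => /andP [Hx1 Hx2] /andP [Hy1 Hy2] Hv1.
  have : u.1 + u.2 <= v.1 by move: Hv1; rewrite Hmin /= -leqNgt.
  move: Hx1 Hx2 Hy1 Hy2; clear; case: u => [a1 a2]; case: v => [b1 b2] /=.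
  move=> *; lia.
- by rewrite -sorted_pairwise; [exact: iota_ltn_sorted | exact: ltn_trans].
- apply: IH => //; exact: path_sorted Hs.
Qed.

Lemma choice_pairs (P : seq nat -> btree -> Prop) (bs : seq (seq nat)) :
  (forall b, b \in bs -> exists R, P b R) ->
  exists ps : seq (seq nat * btree), map fst ps = bs /\ forall p, p \in ps -> P p.1 p.2.
Proof.
elim: bs => [|b bs IH] H; first by exists [::].
have [R HR] := H b (mem_head _ _).
have [ps [E Hps]] : exists ps : seq (seq nat * btree), map fst ps = bs /\ forall p, p \in ps -> P p.1 p.2.
  by apply: IH => c Hc; apply: H; rewrite inE Hc orbT.
exists ((b, R) :: ps); split; first by rewrite /= E.
by move=> p; rewrite inE => /orP [/eqP ->|]; [|exact: Hps].
Qed.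

Definition gb (b : seq nat) := foldr minn (head 0 b) b.
Definition Kd d := 12 * (trunc_log 2 d).+1 + 10.

Lemma perm_flatten_map (A : Type) (f g : A -> seq nat) (s : seq A) :
  (forall i, i < size s -> forall a : A, perm_eq (f (nth a s i)) (g (nth a s i))) ->
  perm_eq (flatten (map f s)) (flatten (map g s)).
Proof.
elim: s => [|x s IH] H //=.
apply: perm_cat; first exact: (H 0 isT x).
apply: IH => i Hi a; exact: (H i.+1 Hi a).
Qed.

Lemma sum_bound (A : Type) (F G : A -> nat) K (s : seq A) :
  (forall i, i < size s -> forall a : A, F (nth a s i) + K <= G (nth a s i)) ->
  sumn (map F s) + K * size s <= sumn (map G s).
Proof.
elim: s => [|x s IH] H /=; first by rewrite muln0.
have := H 0 isT x; have := IH (fun i Hi a => H i.+1 Hi a). rewrite mulnS /= => A1 A2. lia.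
Qed.

Lemma root_path_1B B x : pairwise ltn (1 :: inorder B) -> x \in inorder B ->
  root_path (Node Leaf 1 B) x = 1 :: root_path B x.
Proof.
rewrite pairwise_cons => /andP [/allP H _] Hx; have := H x Hx => /= Hlt.
by rewrite ltnNge (ltnW Hlt) /= Hlt.
Qed.

Lemma lift1 B S e : pairwise ltn (1 :: inorder B) -> {subset inorder S <= inorder B} ->
  sub_at B S e -> sub_at (Node Leaf 1 B) S e.+1.
Proof.
move=> Hpw Hsub [Q [HQ HQx]]; exists (1 :: Q); split => // x Hx.
by rewrite root_path_1B ?HQx //; apply: Hsub.
Qed.

Lemma pair_bound B R g e :
  pairwise ltn (g :: inorder R) ->
  size (root_path (Node Leaf 1 B) g) <= e.+1 -> sub_at (Node Leaf 1 B) R e.+1 ->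
  forall x y, x \in g :: inorder R -> y \in g :: inorder R ->
  tdist (Node Leaf 1 B) x y <= tdist (Node Leaf g R) x y + (2 * e + 2) * ((x == g) + (y == g)).
Proof.
set t1 := Node Leaf 1 B; set t2 := Node Leaf g R.
move=> Hpw Hg [Q [HQ HQx]].
have Hgt : forall z, z \in inorder R -> g < z.
  by move: Hpw; rewrite pairwise_cons => /andP [/allP H _].
have P2 : forall z, z \in inorder R -> root_path t2 z = g :: root_path R z.
  move=> z Hz; have := Hgt z Hz => Hlt; by rewrite /= ltnNge (ltnW Hlt) /= Hlt.
have one_side : forall y, y \in inorder R -> tdist t1 g y <= tdist t2 g y + 2 * e.
  move=> y Hy.
  have T1 := tdist_tri t1 g y 1.
  rewrite (tdist_sym t1 g 1) /t1 !tdist_root -/t1 (HQx y Hy) size_cat in T1.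
  rewrite /t2 tdist_root -/t2 P2 //=.
  move: T1 Hg HQ; lia.
have Hne : forall z, z \in inorder R -> (z == g) = false.
  by move=> z Hz; apply/negbTE; rewrite neq_ltn (Hgt z Hz) orbT.
move=> x y; rewrite !inE => /orP [/eqP ->|Hx] /orP [/eqP ->|Hy].
- by rewrite tdist_refl.
- rewrite (Hne y Hy) eqxx; have := one_side y Hy; lia.
- rewrite (Hne x Hx) eqxx (tdist_sym t1) (tdist_sym t2); have := one_side x Hx; lia.
- rewrite !tdistE !HQx // !P2 // tdP_cat -[g :: root_path R x]/([:: g] ++ _).
  rewrite -[g :: root_path R y]/([:: g] ++ _) tdP_cat; lia.
Qed.

Lemma main d : 2 <= d -> forall X, decomposable d X -> forall n, perm_eq X (iota 1 n) ->
  exists R, inorder (Node Leaf 1 R) = iota 1 n /\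
            W (Node Leaf 1 R) 1 X + 2 * Kd d <= 3 * Kd d * n.
Proof.
move=> Hd X; elim => [|bs Hsz Hne Hcons Hdec IH] n Hp.
  have Hn : n = 1 by have := perm_size Hp; rewrite size_iota.
  subst n; exists Leaf; split => //.
  rewrite /W /= !tdist_refl /Kd; lia.
set K := Kd d.
set e0 := (trunc_log 2 d).+1.
have HK : K = 12 * e0 + 10 by [].
set Xf := flatten bs.
have Hblk : forall b, b \in bs ->
   [/\ perm_eq b (iota (gb b) (size b)), 0 < size b & 1 <= gb b].
  move=> b Hb.
  have H1 : perm_eq b (iota (gb b) (size b)) by exact: (allP Hcons b Hb).
  have H2 : 0 < size b by case: b Hb {H1} (allP Hne b Hb).
  split => //.
  have : gb b \in b by rewrite (perm_mem H1) mem_iota leqnn /= -{1}(addn0 (gb b)) ltn_add2l.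
  move=> Hgb; have : gb b \in Xf by apply/flattenP; exists b.
  by rewrite (perm_mem Hp) mem_iota => /andP [].
pose P (b : seq nat) (R : btree) :=
  inorder (Node Leaf (gb b) R) = iota (gb b) (size b) /\
  W (Node Leaf (gb b) R) (gb b) b + 2 * K <= 3 * K * size b.
have HP : forall b, b \in bs -> exists R, P b R.
  move=> b Hb; have [H1 H2 H3] := Hblk b Hb.
  have [E Hstd] := std_shift H1 H3.
  have [R' [HR1 HR2]] := IH b Hb (size b) Hstd.
  exists (shift (gb b).-1 R').
  have Es : shift (gb b).-1 (Node Leaf 1 R') = Node Leaf (gb b) (shift (gb b).-1 R').
    by rewrite /= addn1 prednK.
  split.
    rewrite -Es inorder_shift HR1 -iotaDl addn1 prednK //.
  have := W_shift (gb b).-1 (Node Leaf 1 R') 1 (std b); rewrite E Es addn1 prednK // => ->; exact: HR2.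
have [ps [Hps1 Hps2]] := choice_pairs HP.
have Hps : forall p, p \in ps -> P p.1 p.2 /\
    [/\ perm_eq p.1 (iota (gb p.1) (size p.1)), 0 < size p.1 & 1 <= gb p.1].
  move=> p Hp'; split; first exact: Hps2.
  apply: Hblk; rewrite -Hps1; exact: map_f.
set lek := fun p q : seq nat * btree => gb p.1 <= gb q.1.
set qs := sort lek ps.
have Hq : perm_eq qs ps by rewrite /qs perm_sort perm_refl.
have Hqs : sorted lek qs by apply: sort_sorted => p q; exact: leq_total.
have Hmemq : forall p, p \in qs -> p \in ps by move=> p; rewrite (perm_mem Hq).
have Hsize : size qs = size bs by rewrite (perm_size Hq) -Hps1 size_map.
case Eqs : qs Hsize => [|p1 rest] Hsize; first by move: Hsz; rewrite -Hsize.
set rest' := [seq (gb q.1, q.2) | q <- rest].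
set B := bal (size rest') p1.2 rest'.
have HinB : inorder B = inorder p1.2 ++ flatkt rest' by rewrite /B bal_inorder.
set Y := flatten [seq iota u.1 u.2 | u <- [seq (gb q.1, size q.1) | q <- qs]].
have Hin : gb p1.1 :: inorder B = Y.
  have Hp1 : p1 \in ps by apply: Hmemq; rewrite Eqs mem_head.
  rewrite /Y Eqs /= HinB -(proj1 (Hps2 _ Hp1)) /=; congr (_ :: _ ++ _).
  rewrite /flatkt -!map_comp; congr flatten; apply/eq_in_map => q Hq' /=.
  have Hq2 : q \in ps by apply: Hmemq; rewrite Eqs inE Hq' orbT.
  by rewrite -(proj1 (Hps2 _ Hq2)).
have Hperm : perm_eq Y (iota 1 n).
  apply: perm_trans Hp.
  apply: (@perm_trans _ (flatten (map fst qs))).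
    rewrite /Y -map_comp; apply: perm_flatten_map => i Hi a /=.
    have Hm : nth a qs i \in ps by apply: Hmemq; exact: mem_nth.
    have [_ [H1 _ _]] := Hps _ Hm; by rewrite perm_sym.
  rewrite /Xf -Hps1; apply: perm_flatten; exact: perm_map.
have Hpw : pairwise ltn Y.
  apply: flat_iota_sorted.
  - by rewrite sorted_map.
  - apply/allP => u /mapP [q Hq' ->] /=.
    by have [_ [_ H2 _]] := Hps _ (Hmemq _ Hq').
  - by rewrite (perm_uniq Hperm) iota_uniq.
have HY : Y = iota 1 n.
  apply: (irr_sorted_eq ltn_trans ltnn); last exact: perm_mem.
    by rewrite sorted_pairwise //; exact: ltn_trans.
  exact: iota_ltn_sorted.
move: Hin; rewrite HY.
case: n Hp HY Hperm => [|n'] Hp HY Hperm //= [Eg1 HinB2].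
exists B; split; first by rewrite /= HinB2.
set Tv := Node Leaf 1 B.
have Hpw1 : pairwise ltn (1 :: inorder B).
  rewrite HinB2 -sorted_pairwise; [exact: (iota_ltn_sorted 1 n'.+1)|exact: ltn_trans].
have Hpw2 : pairwise ltn (inorder B) by move: Hpw1; rewrite pairwise_cons => /andP [].
have Hrs : size rest' < 2 ^ e0.
  have := trunc_log_ltn d (isT : 1 < 2); rewrite -/e0.
  rewrite size_map; move: Hsize Hsz => /= Hs Hsz'. lia.
have [H0 Hks] := bal_path (leqnn _) Hrs Hpw2.
rewrite -/B in H0 Hks.
have Hblock : forall p, p \in ps ->
    W Tv (gb p.1) p.1 + 2 * tdist Tv (gb p.1) 1 + K <= 3 * K * size p.1.
  move=> p Hp'.
  have [[HP1 HP2] [H1 H2 H3]] := Hps p Hp'.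
  have [Hg Hsub] : size (root_path Tv (gb p.1)) <= e0.+1 /\ sub_at Tv p.2 e0.+1.
    have : p \in qs by rewrite (perm_mem Hq).
    rewrite Eqs inE => /orP [/eqP Ep|Hr].
      subst p; rewrite Eg1 /Tv root_path_root; split => //.
      apply: lift1 => // x Hx; by rewrite HinB mem_cat Hx.
    have Hr' : (gb p.1, p.2) \in rest' by apply: (map_f (fun q => (gb q.1, q.2))).
    have [Hk1 Hk2] := Hks _ _ Hr'.
    have HgB : gb p.1 \in inorder B.
      by rewrite HinB mem_cat (mem_flatkt Hr') ?eqxx ?orbT.
    split; first by rewrite /Tv root_path_1B.
    apply: lift1 => // x Hx; by rewrite HinB mem_cat (mem_flatkt Hr') ?Hx ?orbT.
  have Htd : tdist Tv (gb p.1) 1 <= e0.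
    rewrite tdist_sym /Tv tdist_root -/Tv; move: Hg; by case: (size (root_path Tv (gb p.1))).
  have HP1' : gb p.1 :: inorder p.2 = iota (gb p.1) (size p.1) by exact: HP1.
  have HpwR : pairwise ltn (gb p.1 :: inorder p.2).
    rewrite HP1' -sorted_pairwise; [exact: iota_ltn_sorted|exact: ltn_trans].
  have Hcmp := W_compare (pair_bound HpwR Hg Hsub) (mem_head _ _) _ _ (xs := p.1).
  have Hall : all (mem (gb p.1 :: inorder p.2)) p.1.
    apply/allP => x Hx; by rewrite /= HP1' -(perm_mem H1).
  have Hcnt : count_mem (gb p.1) p.1 <= 1.
    by rewrite count_uniq_mem ?leq_b1 // (perm_uniq H1) iota_uniq.
  have := Hcmp Hall Hcnt.
  rewrite -/Tv; move: HP2 Htd; rewrite HK; move: (3 * (12 * e0 + 10) * size p.1) => M.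
  move: (W Tv _ _) (W (Node Leaf _ _) _ _) (tdist Tv _ _) => w1 w2 t0; clear; move=> A1 A2 A3; lia.
have Hwalk := walk_bound Tv 1 (fun p => gb p.1) fst ps.
rewrite Hps1 -/Xf in Hwalk.
have Hsum := @sum_bound _ (fun p => W Tv (gb p.1) p.1 + 2 * tdist Tv (gb p.1) 1)
   (fun p => 3 * K * size p.1) K ps (fun i Hi a => Hblock _ (mem_nth a Hi)).
have Hn : n'.+1 = sumn [seq size p.1 | p <- ps].
  have := perm_size Hp; rewrite size_iota /Xf size_flatten => <-.
  by rewrite /shape -Hps1 -map_comp.
have Hsm : sumn [seq 3 * K * size p.1 | p <- ps] = 3 * K * sumn [seq size p.1 | p <- ps].
  elim: (ps) => [|q qs' IHq] /=; first by rewrite muln0.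
  by rewrite IHq mulnDr.
have Hps_size : 2 <= size ps by rewrite -(size_map fst) Hps1; case/andP: Hsz.
move: Hwalk Hsum; rewrite Hsm -Hn.
set w := W _ _ _; set S1 := sumn _.
move: Hps_size; clear; nia.
Qed.

Lemma ln_le' (x y : R) : Rlt 0 x -> Rle x y -> Rle (ln x) (ln y).
Proof.
move=> Hx Hxy; case: (Rle_lt_or_eq_dec _ _ Hxy) => H.
  by apply: Rlt_le; apply: ln_increasing.
by rewrite H; apply: Rle_refl.
Qed.

Lemma INR_exp2 t : INR (2 ^ t) = pow 2 t.
Proof.
elim: t => [|t IH] //=.
by rewrite expnS -multE mult_INR IH.
Qed.

Lemma logP_bounds d : 2 <= d ->
  Rle (INR (trunc_log 2 d)) (logP (INR d)) /\ Rle 1 (logP (INR d)).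
Proof.
move=> Hd.
have Hd2 : Rle 2 (INR d) by have := le_INR 2 d (elimT leP Hd).
have Hl2 : Rlt 0 (ln 2) by have := ln_lt_2; lra.
rewrite /logP Rmax_right //.
have Hinv : Rlt 0 (/ ln 2) by apply: Rinv_0_lt_compat.
set t := trunc_log 2 d.
have Ht : Rle (INR t * ln 2) (ln (INR d)).
  rewrite -ln_pow; last lra.
  apply: ln_le'; first by apply: pow_lt; lra.
  rewrite -INR_exp2; apply: le_INR; apply/leP; apply: trunc_logP => //; lia.
have H1 : Rle (ln 2) (ln (INR d)) by apply: ln_le'; lra.
split.
  apply: (Rmult_le_reg_r (ln 2)) => //.
  rewrite /Rdiv Rmult_assoc Rinv_l; last lra.
  by rewrite Rmult_1_r.
apply: (Rmult_le_reg_r (ln 2)) => //.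
rewrite /Rdiv Rmult_assoc Rinv_l; last lra.
by rewrite Rmult_1_r Rmult_1_l.
Qed.

Lemma INR_addn a b : INR (a + b) = Rplus (INR a) (INR b).
Proof. exact: plus_INR. Qed.
Lemma INR_muln a b : INR (a * b) = Rmult (INR a) (INR b).
Proof. exact: mult_INR. Qed.

Lemma INR_K d : INR (3 * Kd d) = Rplus (Rmult 36 (INR (trunc_log 2 d))) 66.
Proof.
rewrite /Kd INR_muln INR_addn INR_muln (S_INR (trunc_log 2 d)).
have -> : INR 3 = IZR 3 by rewrite /=; lra.
have -> : INR 12 = IZR 12 by rewrite /=; lra.
have -> : INR 10 = IZR 10 by rewrite /=; lra.
lra.
Qed.
Theorem theorem5 :
  exists c : R, Rlt (IZR 0) c /\
    forall (d n : nat) (X : seq nat),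
      2 <= d -> is_perm n X -> decomposable d X ->
      F1_le n X (Rmult (Rmult c (logP (INR d))) (INR (size X))).
Proof.
exists (IZR 102); split; first lra.
move=> d n X Hd Hp HX.
have [R [Hin Hc]] := main Hd HX Hp.
have Hsz : size X = n by rewrite (perm_size Hp) size_iota.
have HK : 0 < Kd d by rewrite /Kd; lia.
have Hn : 0 < n.
  case: n Hp Hin Hc Hsz => [|n] // _ _; rewrite muln0; lia.
exists (Node Leaf 1 R), 1; split => //; split.
  by rewrite mem_iota leqnn /= -{1}(addn0 1) ltn_add2l.
have Hfc : finger_cost (Node Leaf 1 R) 1 X <= 3 * Kd d * n.
  by move: Hc; rewrite /W; lia.
have [Ht H1] := @logP_bounds d Hd.
apply: Rle_trans; first by apply: le_INR; apply/leP; exact: Hfc.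
rewrite Hsz INR_muln.
apply: Rmult_le_compat_r; first exact: pos_INR.
rewrite INR_K.
lra.
Qed.
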